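(* Let $X$ be a finite set, $t_1<\dots<t_M$ real numbers and $(\mathcal{P}^{t_m})_{m\le M}$ partitions of $X$, with associated continuous-indexed Multiscale Clustering Filtration $(K^t)_{t\ge t_1}$ and partitions $\mathcal{P}^t$. For each $t\ge t_1$, the $0$-th Betti number $\beta_0^t$ of $K^t$ satisfies: (i) $\beta_0^t\le \min_{s\le t}\#\mathcal{P}^s$; (ii) $\beta_0^t=\#\mathcal{P}^t$ if and only if $\mathcal{P}^t$ is non-fractured.
   Context: A partition of $X$ is a collection of non-empty pairwise disjoint subsets (clusters) whose union is $X$; $\#\mathcal{P}$ is its number of clusters. For partitions $\mathcal{P},\mathcal{Q}$, $\mathcal{P}\le\mathcal{Q}$ ($\mathcal{P}$ refines $\mathcal{Q}$) means every cluster of $\mathcal{P}$ is contained in a cluster of $\mathcal{Q}$. For a finite non-empty set $C$, $\Delta C$ is the set of all non-empty subsets of $C$. The MCF is $K^{t_m}:=\bigcup_{l\le m}\bigcup_{C\in\mathcal{P}^{t_l}}\Delta C$. For real $t$, set $\mathcal{P}^t:=\mathcal{P}^{t_m}$ where $m$ is the largest index with $t_m\le t$ (and $\mathcal{P}^t:=\mathcal{P}^{t_1}$ if $t<t_1$), and for $t\ge t_1$ set $K^t:=K^{t_m}$ with the same $m$. $\beta_0^t$ is the rank of $H_0(K^t)$, i.e. the number of connected components of $K^t$. The partition $\mathcal{P}^t$ is non-fractured if $\mathcal{P}^s\le\mathcal{P}^t$ for all $s\le t$, and fractured otherwise. *)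

(* Defs.v *)
From HB Require Import structures.
From mathcomp Require Import all_boot all_order all_algebra.
From mathcomp Require Import reals.
Set Implicit Arguments. Unset Strict Implicit. Unset Printing Implicit Defensive.
Import Order.TTheory GRing.Theory Num.Theory.
Local Open Scope ring_scope.

(* Convention: the M time points t_1 < ... < t_M are indexed by 'I_M.+1
   (so there are M.+1 >= 1 of them; ord0 is t_1).  *)

Section MCF.
Variables (R : realType) (X : finType) (M : nat).
Variable (tm : 'I_M.+1 -> R).
Variable (P : 'I_M.+1 -> {set {set X}}).

(* largest index m with t_m <= s (0, i.e. t_1, if there is none) *)
Definition mcf_idx (s : R) : 'I_M.+1 :=
  inord (\max_(i < M.+1 | (tm i <= s)%R) (i : nat))%N.

Definition mcf_part (s : R) : {set {set X}} := P (mcf_idx s).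

Definition mcf_complex (s : R) : {set {set X}} :=
  [set S : {set X} | (S != set0) &&
     [exists l : 'I_M.+1, (l <= mcf_idx s)%N &&
        [exists C in P l, S \subset C]]].
End MCF.

(* Number of connected components of an (abstract simplicial) complex K,
   given as its set of simplices: classes of vertices under the
   equivalence generated by "lying in a common simplex". *)
Definition simplex_adj (X : finType) (K : {set {set X}}) : rel X :=
  fun x y => [exists S in K, (x \in S) && (y \in S)].

Definition n_components (X : finType) (K : {set {set X}}) : nat :=
  #|[set [set y | connect (simplex_adj K) x y] | x in \bigcup_(S in K) S]|.

Definition mcf_beta0 (R : realType) (X : finType) (M : nat)
  (tm : 'I_M.+1 -> R) (P : 'I_M.+1 -> {set {set X}}) (s : R) : nat :=
  n_components (mcf_complex tm P s).

Definition refines (X : finType) (A B : {set {set X}}) : bool :=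
  [forall C in A, exists D in B, C \subset D].

Definition non_fractured (R : realType) (X : finType) (M : nat)
  (tm : 'I_M.+1 -> R) (P : 'I_M.+1 -> {set {set X}}) (t : R) : Prop :=
  forall s : R, s <= t -> refines (mcf_part tm P s) (mcf_part tm P t).

(* Main.v *)
Require Import Defs.
From HB Require Import structures.
From mathcomp Require Import all_boot all_order all_algebra.
From mathcomp Require Import reals.
Import Order.TTheory GRing.Theory Num.Theory.
Local Open Scope ring_scope.

Section Aux.
Variables (R : realType) (X : finType) (M : nat).
Variable (tm : 'I_M.+1 -> R).
Variable (P : 'I_M.+1 -> {set {set X}}).
Hypothesis htm : forall i j : 'I_M.+1, (i < j)%N -> tm i < tm j.
Hypothesis hP : forall m : 'I_M.+1, partition (P m) [set: X].

Lemma idxE s : (mcf_idx tm s : nat) = \max_(i < M.+1 | (tm i <= s)%R) i.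
Proof.
rewrite /mcf_idx inordK // ltnS; apply/bigmax_leqP => i _; by rewrite -ltnS.
Qed.

Lemma idx_mono s t : s <= t -> (mcf_idx tm s <= mcf_idx tm t)%N.
Proof.
move=> st; rewrite !idxE; apply/bigmax_leqP => i hi; apply: leq_bigmax_cond.
exact: le_trans hi st.
Qed.

Lemma tm_mono (i j : 'I_M.+1) : (i <= j)%N -> tm i <= tm j.
Proof.
rewrite leq_eqVlt => /orP [/eqP/val_inj -> //| /htm /ltW //].
Qed.

Lemma idx_tm l : mcf_idx tm (tm l) = l.
Proof.
apply/val_inj; rewrite /= idxE; apply/eqP; rewrite eqn_leq; apply/andP; split.
  apply/bigmax_leqP => i hi; rewrite leqNgt; apply/negP => /htm.
  by rewrite ltNge hi.
exact: leq_bigmax_cond.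
Qed.

Lemma tm_le t (l : 'I_M.+1) : tm ord0 <= t -> (l <= mcf_idx tm t)%N -> tm l <= t.
Proof.
move=> ht; rewrite idxE.
have [|i0 hi0 ->] := @eq_bigmax_cond _ (fun i : 'I_M.+1 => tm i <= t) (fun i => i : nat).
  by apply/card_gt0P; exists ord0.
move=> li; have H1 : tm l <= tm i0 by apply: tm_mono.
have H2 : tm i0 <= t by exact: hi0.
exact: le_trans H1 H2.
Qed.

Lemma cov l x : x \in cover (P l).
Proof. by case/and3P: (hP l) => /eqP -> _ _; rewrite inE. Qed.

Lemma triv l : trivIset (P l).
Proof. by case/and3P: (hP l). Qed.

Lemma nz {l B} : B \in P l -> B != set0.
Proof. by case/and3P: (hP l) => _ _ h0 hB; apply/eqP => E; rewrite -E hB in h0. Qed.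

Variable t : R.
Hypothesis ht : tm ord0 <= t.
Let K := mcf_complex tm P t.
Let m := mcf_idx tm t.
Let conn := connect (simplex_adj K).
Let f x := [set y | conn x y].
Let h (B : {set X}) := \bigcup_(x in B) f x.

Lemma inK {l : 'I_M.+1} {C x} : (l <= m)%N -> C \in P l -> x \in C -> C \in K.
Proof.
move=> hl hC xC; rewrite inE; apply/andP; split; first by apply/set0Pn; exists x.
apply/existsP; exists l; rewrite hl /=; apply/existsP; exists C; by rewrite hC subxx.
Qed.

Lemma conn_block {l : 'I_M.+1} {C x y} : (l <= m)%N -> C \in P l -> x \in C -> y \in C -> conn x y.
Proof.
move=> hl hC xC yC; apply: connect1; apply/existsP; exists C.
by rewrite (inK hl hC xC) xC yC.
Qed.

Lemma conn_sym : connect_sym (simplex_adj K).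
Proof.
apply: sym_connect_sym => x y; rewrite /simplex_adj.
apply/existsP/existsP => [[S /andP [SK /andP [a b]]]|[S /andP [SK /andP [a b]]]];
  exists S; by rewrite SK a b.
Qed.

Lemma fE {x y} : conn x y -> f x = f y.
Proof.
move=> cxy; apply/setP => z; rewrite !inE; apply/idP/idP => H.
  by apply: connect_trans H; rewrite /conn conn_sym.
exact: connect_trans cxy H.
Qed.

Lemma hE {l : 'I_M.+1} {B x} : (l <= m)%N -> B \in P l -> x \in B -> h B = f x.
Proof.
move=> hl hB xB; apply/setP => z; apply/bigcupP/idP => [[y yB]|zf].
  by rewrite (fE (conn_block hl hB yB xB)).
by exists x.
Qed.

Lemma Vset : \bigcup_(S in K) S = [set: X].
Proof.
apply/setP => x; rewrite inE; apply/bigcupP; exists (pblock (P m) x).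
  by apply: (@inK m _ x) => //; [exact: pblock_mem (cov _ _) | rewrite mem_pblock cov].
by rewrite mem_pblock cov.
Qed.

Lemma beta0E : mcf_beta0 tm P t = #|f @: [set: X]|.
Proof. by rewrite /mcf_beta0 /n_components -/K Vset. Qed.

Lemma fsub (l : 'I_M.+1) : (l <= m)%N -> f @: [set: X] \subset h @: P l.
Proof.
move=> hl; apply/subsetP => _ /imsetP [x _ ->]; apply/imsetP.
exists (pblock (P l) x); first exact: pblock_mem (cov _ _).
have xb : x \in pblock (P l) x by rewrite mem_pblock cov.
by rewrite (hE hl (pblock_mem (cov _ _)) xb).
Qed.

Lemma fimE : f @: [set: X] = h @: P m.
Proof.
apply/eqP; rewrite eqEsubset (@fsub m (leqnn m)) /=.
apply/subsetP => _ /imsetP [B hB ->]; have /set0Pn [x xB] := nz hB.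
by rewrite (hE (leqnn m) hB xB); apply/imsetP; exists x.
Qed.

Lemma part1 s : s <= t -> (mcf_beta0 tm P t <= #|mcf_part tm P s|)%N.
Proof.
move=> st; rewrite beta0E /mcf_part.
have H1 := subset_leq_card (@fsub (mcf_idx tm s) (@idx_mono s t st)).
exact: leq_trans H1 (leq_imset_card _ _).
Qed.

Lemma part2 : mcf_beta0 tm P t = #|mcf_part tm P t| <-> non_fractured tm P t.
Proof.
rewrite beta0E fimE /mcf_part -/m; split.
- move=> /eqP /imset_injP inj s st.
  set l := mcf_idx tm s.
  have hl : (l <= m)%N := @idx_mono s t st.
  apply/forall_inP => C hC; have /set0Pn [x xC] := nz hC.
  apply/exists_inP; exists (pblock (P m) x); first exact: pblock_mem (cov _ _).
  apply/subsetP => y yC.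
  have ex : x \in pblock (P m) x by rewrite mem_pblock cov.
  have ey : y \in pblock (P m) y by rewrite mem_pblock cov.
  have E : h (pblock (P m) x) = h (pblock (P m) y).
    rewrite (hE (leqnn m) (pblock_mem (cov _ _)) ex).
    rewrite (hE (leqnn m) (pblock_mem (cov _ _)) ey).
    exact: fE (conn_block hl hC xC yC).
  by rewrite (inj _ _ (pblock_mem (cov _ _)) (pblock_mem (cov _ _)) E).
- move=> NF.
  have ref (l : 'I_M.+1) : (l <= m)%N -> refines (P l) (P m).
    move=> hl; have := NF _ (@tm_le t l ht hl); by rewrite /mcf_part idx_tm.
  have adjb x y : simplex_adj K x y -> pblock (P m) x = pblock (P m) y.
    case/existsP => S /andP [SK /andP [xS yS]].
    move: SK; rewrite inE => /andP [_ /existsP [l /andP [hl /existsP [C /andP [hC SC]]]]].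
    have /forall_inP /(_ C hC) /exists_inP [D hD CD] := ref l hl.
    have xD : x \in D by apply: (subsetP CD); apply: (subsetP SC).
    have yD : y \in D by apply: (subsetP CD); apply: (subsetP SC).
    by rewrite (def_pblock (triv _) hD xD) (def_pblock (triv _) hD yD).
  have connb x y : conn x y -> pblock (P m) x = pblock (P m) y.
    move=> cxy; apply/eqP.
    have cl : closed (simplex_adj K) [pred z | pblock (P m) x == pblock (P m) z].
      by move=> u v /adjb E; rewrite !inE E.
    have H := closed_connect cl cxy.
    rewrite !inE eqxx in H; by rewrite -H.
  apply/eqP/imset_injP => B1 B2 hB1 hB2 E.
  have /set0Pn [x1 x1B] := nz hB1.
  have /set0Pn [x2 x2B] := nz hB2.
  move: E; rewrite (hE (leqnn m) hB1 x1B) (hE (leqnn m) hB2 x2B) => E.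
  have c : conn x1 x2.
    have : x2 \in f x2 by rewrite inE; exact: connect0.
    by rewrite -E inE.
  by rewrite -(def_pblock (triv _) hB1 x1B) -(def_pblock (triv _) hB2 x2B) (connb _ _ c).
Qed.

End Aux.

Theorem proposition3 (R : realType) (X : finType) (M : nat)
  (tm : 'I_M.+1 -> R) (P : 'I_M.+1 -> {set {set X}})
  (htm : forall i j : 'I_M.+1, (i < j)%N -> tm i < tm j)
  (hP : forall m : 'I_M.+1, partition (P m) [set: X])
  (t : R) (ht : tm ord0 <= t) :
  (forall s : R, s <= t -> (mcf_beta0 tm P t <= #|mcf_part tm P s|)%N) /\
  (mcf_beta0 tm P t = #|mcf_part tm P t| <-> non_fractured tm P t).
Proof.
split; [exact: part1 | exact: part2].
Qed.
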